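(* Let $G=(V,E)$ be a (not necessarily connected) graph with $|V|=n\ge1$ and adjacency matrix $A$, let $m\ge1$, and assume $\bar K_m+G$ is not a complete graph. Define \begin{itemize} \item $\Lambda_0=\{-m\}$ if $m\ge2$ and $m$ is an eigenvalue of $J-A$, and $\Lambda_0=\emptyset$ otherwise; \item $\Lambda_1$ = the set of $\alpha\in\mathbb{R}\setminus(\mathrm{ev}(A)\cup\{0,-m,-2m\})$ satisfying $(\alpha+2m)\langle\mathbf 1,(A-\alpha I)^{-1}\mathbf 1\rangle-m=0$; \item $\Lambda_2=\{-2m\}$ if $-2m\in\mathrm{ev}(A)$, and $\Lambda_2=\emptyset$ otherwise; \item $\Lambda_3$ = the set of $\alpha\in\mathrm{ev}(A)\setminus\{0,-m,-2m\}$ for which there is $g\in\mathbb{R}^n$ with $Ag=\alpha g$, $\langle g,g\rangle=1$, $\langle\mathbf 1,g\rangle=0$. \end{itemize} Then \[ \mathrm{QEC}(\bar K_m+G)=-\tilde\alpha-2,\qquad \tilde\alpha=\min(\Lambda_0\cup\Lambda_1\cup\Lambda_2\cup\Lambda_3). \]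
   Context: For a finite connected graph $H=(V,E)$ with $|V|\ge2$ and distance matrix $D$ (graph distance), $\mathrm{QEC}(H)=\max\{\langle f,Df\rangle : f\in\mathbb{R}^V,\ \langle f,f\rangle=1,\ \langle\mathbf 1,f\rangle=0\}$, with $\mathbf 1$ the all-ones vector. $\bar K_m$ is the graph on $m$ vertices with no edges. The join $G_1+G_2$ of disjoint graphs has vertex set $V_1\cup V_2$ and edge set $E_1\cup E_2\cup\{\{x,y\}:x\in V_1,y\in V_2\}$. $J$ is the $n\times n$ all-ones matrix, $I$ the identity, $\mathrm{ev}(A)$ the set of eigenvalues of $A$. *)

(* Defs.v *)
From HB Require Import structures.
From mathcomp Require Import all_boot all_order all_algebra.
From mathcomp Require Import reals.
Set Implicit Arguments. Unset Strict Implicit. Unset Printing Implicit Defensive.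
Import Order.TTheory GRing.Theory Num.Theory.
Local Open Scope ring_scope.

Definition simple_graph (T : finType) (e : rel T) : Prop :=
  (forall x y, e x y = e y x) /\ (forall x, ~~ e x x).

Definition complete_graph (T : finType) (e : rel T) : Prop :=
  forall x y, x != y -> e x y.

Fixpoint reach (T : finType) (e : rel T) (k : nat) (x y : T) : bool :=
  match k with
  | 0 => x == y
  | k'.+1 => (x == y) || [exists z, e x z && reach e k' z y]
  end.

(* graph distance: least k with a walk of length k (correct for connected graphs;
   any shortest path has length < #|T|) *)
Definition gdist (T : finType) (e : rel T) (x y : T) : nat :=
  find (fun k => reach e k x y) (iota 0 #|T|).

Definition distqf (R : realType) (T : finType) (e : rel T) (f : T -> R) : R :=
  \sum_(x : T) \sum_(y : T) f x * (gdist e x y)%:R * f y.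

Definition is_QEC (R : realType) (T : finType) (e : rel T) (q : R) : Prop :=
  (exists f : T -> R, \sum_x f x ^+ 2 = 1 /\ \sum_x f x = 0 /\ distqf e f = q) /\
  (forall f : T -> R, \sum_x f x ^+ 2 = 1 -> \sum_x f x = 0 -> distqf e f <= q).

Definition join_Kbar (m n : nat) (e : rel 'I_n) : rel ('I_m + 'I_n)%type :=
  fun x y => match x, y with
             | inl _, inl _ => false
             | inr i, inr j => e i j
             | _, _ => true
             end.

Definition adjmx (R : realType) (n : nat) (e : rel 'I_n) : 'M[R]_n :=
  \matrix_(i, j) (e i j)%:R.

Definition sum_entries (R : realType) (n : nat) (M : 'M[R]_n) : R :=
  \sum_i \sum_j M i j.

Definition in_Lambda (R : realType) (m n : nat) (A : 'M[R]_n) (a : R) : Prop :=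
  let mR := (m%:R : R) in
  ((2 <= m)%N /\ eigenvalue (const_mx 1 - A) mR /\ a = - mR)
  \/
  (~~ eigenvalue A a /\ a <> 0 /\ a <> - mR /\ a <> - (2 * mR) /\
   (a + 2 * mR) * sum_entries (invmx (A - a%:M)) - mR = 0)
  \/
  (eigenvalue A (- (2 * mR)) /\ a = - (2 * mR))
  \/
  (eigenvalue A a /\ a <> 0 /\ a <> - mR /\ a <> - (2 * mR) /\
   exists g : 'cV[R]_n, A *m g = a *: g /\ \sum_i g i 0 ^+ 2 = 1 /\ \sum_i g i 0 = 0).

Arguments join_Kbar m {n} e.
Arguments in_Lambda {R} m {n} A a.

(* Main.v *)
Require Import Defs.
From HB Require Import structures.
From mathcomp Require Import all_boot all_order all_algebra.
From mathcomp Require Import reals.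
From mathcomp Require Import boolp classical_sets topology normedtype derive matrix_normedtype.
From mathcomp Require Import ring lra.
Import numFieldNormedType.Exports.
Set Implicit Arguments. Unset Strict Implicit. Unset Printing Implicit Defensive.
Import Order.TTheory GRing.Theory Num.Theory.
Local Open Scope ring_scope.

Definition QF (R : realType) (T : finType) (C : T -> T -> R) (f : T -> R) :=
  \sum_x \sum_y f x * C x y * f y.

Section Analytic.
Local Open Scope classical_set_scope.
Local Open Scope ring_scope.
Variable R : realType.

Lemma sum_continuous (N : nat) (I : Type) (s : seq I) (F : I -> 'rV[R]_N -> R) :
  (forall i, continuous (F i)) -> continuous (fun v => \sum_(i <- s) F i v).
Proof.
move=> cF; elim: s => [|a s IH].
  rewrite (_ : (fun v => _) = fun=> 0); first exact: cst_continuous.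
  by apply/funext => v; rewrite big_nil.
rewrite (_ : (fun v => _) = (fun v => F a v + \sum_(i <- s) F i v)).
  by move=> x; apply: (@continuousD R R^o); [exact: cF | exact: IH].
by apply/funext => v; rewrite big_cons.
Qed.

Lemma contM (N : nat) (f g : 'rV[R]_N -> R) :
  continuous f -> continuous g -> continuous (fun v => f v * g v).
Proof. by move=> cf cg x; exact: (continuousM (cf x) (cg x)). Qed.

Lemma exists_min (T : finType) (C : T -> T -> R) :
  (exists f : T -> R, \sum_x f x ^+ 2 = 1 /\ \sum_x f x = 0) ->
  exists f : T -> R, [/\ \sum_x f x ^+ 2 = 1, \sum_x f x = 0 &
   forall g : T -> R, \sum_x g x ^+ 2 = 1 -> \sum_x g x = 0 -> QF C f <= QF C g].
Proof.
move=> [f0 [f01 f02]].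
pose N := #|T|.
pose vf (v : 'rV[R]_N) : T -> R := fun x => v ord0 (enum_rank x).
pose fv (f : T -> R) : 'rV[R]_N := \row_i f (enum_val i).
have vfK f : vf (fv f) = f.
  by apply/funext => x; rewrite /vf /fv mxE enum_rankK.
have cc x : continuous (fun v : 'rV[R]_N => vf v x) by exact: coord_continuous.
pose A := [set v : 'rV[R]_N | \sum_x vf v x ^+ 2 = 1 /\ \sum_x vf v x = 0].
have A0 : A !=set0 by exists (fv f0); rewrite /A /= vfK.
have c1 : continuous (fun v : 'rV[R]_N => \sum_x vf v x ^+ 2).
  apply: sum_continuous => x.
  under eq_fun do rewrite expr2.
  exact: contM.
have c2 : continuous (fun v : 'rV[R]_N => \sum_x vf v x).
  by apply: sum_continuous => x; exact: cc.
have cq : continuous (fun v : 'rV[R]_N => QF C (vf v)).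
  apply: sum_continuous => x; apply: sum_continuous => y.
  apply: contM; last exact: cc.
  apply: contM; first exact: cc.
  exact: cst_continuous.
have clA : closed A.
  have -> : A = (fun v => \sum_x vf v x ^+ 2) @^-1` [set 1] `&`
                (fun v => \sum_x vf v x) @^-1` [set 0] by [].
  apply: closedI; apply: preimage_closed.
  - by move=> v _; exact: c1.
  - exact: closed_eq.
  - by move=> v _; exact: c2.
  - exact: closed_eq.
have cA : compact A.
  apply: (subclosed_compact clA
    (rV_compact (fun i : 'I_N => @segment_compact R (-1) 1))).
  move=> v [Av _] i /=.
  have -> : v ord0 i = vf v (enum_val i) by rewrite /vf enum_valK.
  rewrite in_itv /= -ler_norml -(expr_le1 (n:=2)) // real_normK ?num_real //.
  rewrite -Av (bigD1 (enum_val i)) //= lerDl.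
  by apply: sumr_ge0 => y _; exact: sqr_ge0.
have [c cA' cmin] := compact_EVT_min A0 cA (continuous_subspaceT cq).
move: cA'; rewrite inE => -[c1' c2'].
exists (vf c); split => // g g1 g2.
have := cmin (fv g); rewrite vfK; apply; rewrite inE /A /= vfK; by split.
Qed.
End Analytic.

Section Hom.
Variables (R : realType) (T : finType).

Lemma sum_delta (F : T -> R) (x : T) : \sum_y (y == x)%:R * F y = F x.
Proof.
rewrite (bigD1 x) //= eqxx mul1r big1 ?addr0 // => y /negbTE ->.
by rewrite mul0r.
Qed.

Lemma sum_delta1 (x : T) : \sum_y (y == x)%:R = 1 :> R.
Proof. by rewrite -[RHS](sum_delta (fun=> 1) x) /=; under [RHS]eq_bigr do rewrite mulr1. Qed.

Lemma sumsq0 (g : T -> R) : \sum_x g x ^+ 2 = 0 -> forall x, g x = 0.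
Proof.
move=> /eqP; rewrite psumr_eq0 => [/allP h x|x _]; last exact: sqr_ge0.
by have := h x (mem_index_enum x); rewrite sqrf_eq0 => /eqP.
Qed.

Lemma scale_props (C : T -> T -> R) (g : T -> R) (t : R) :
  [/\ \sum_x (t * g x) ^+ 2 = t ^+ 2 * \sum_x g x ^+ 2,
      \sum_x t * g x = t * \sum_x g x &
      QF C (fun x => t * g x) = t ^+ 2 * QF C g].
Proof.
split; rewrite ?mulr_sumr //; apply: eq_bigr => x _; first by ring.
by rewrite mulr_sumr; apply: eq_bigr => y _; ring.
Qed.

Lemma normalize (g : T -> R) : \sum_x g x = 0 -> 0 < \sum_x g x ^+ 2 ->
  exists f : T -> R, \sum_x f x ^+ 2 = 1 /\ \sum_x f x = 0.
Proof.
move=> g0 S0; pose t := (Num.sqrt (\sum_x g x ^+ 2))^-1.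
have [h1 h2 _] := scale_props (fun _ _ => 0) g t.
exists (fun x => t * g x); rewrite h1 h2 g0 mulr0; split => //.
by rewrite /t exprVn sqr_sqrtr ?ltW // mulVf // gt_eqF.
Qed.

Lemma hom_min (C : T -> T -> R) (fs : T -> R) :
  (forall g, \sum_x g x ^+ 2 = 1 -> \sum_x g x = 0 -> QF C fs <= QF C g) ->
  forall g, \sum_x g x = 0 -> QF C fs * \sum_x g x ^+ 2 <= QF C g.
Proof.
move=> H g g0.
have [S0|S0] := eqVneq (\sum_x g x ^+ 2) 0.
  rewrite S0 mulr0 /QF big1 // => x _; rewrite big1 // => y _.
  by rewrite (sumsq0 S0 x) !mul0r.
have Sp : 0 < \sum_x g x ^+ 2.
  by rewrite lt_def S0 /=; apply: sumr_ge0 => x _; exact: sqr_ge0.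
pose t := (Num.sqrt (\sum_x g x ^+ 2))^-1.
have t2 : t ^+ 2 * \sum_x g x ^+ 2 = 1.
  by rewrite /t exprVn sqr_sqrtr ?ltW // mulVf.
have [h1 h2 h3] := scale_props C g t.
have := H (fun x => t * g x); rewrite h1 h2 h3 g0 mulr0 t2 => /(_ erefl erefl) h.
have := ler_wpM2r (ltW Sp) h.
by rewrite mulrAC t2 mul1r.
Qed.
End Hom.

Section Gen.
Variables (R : realType) (T : finType).
Lemma distqf_gen (J : rel T) (f : T -> R) :
  (forall x, J x x = false) ->
  (forall x y, gdist J x y = if x == y then 0%N else if J x y then 1%N else 2%N) ->
  distqf J f = 2 * (\sum_x f x) ^+ 2 - 2 * \sum_x f x ^+ 2
               - QF (fun x y => (J x y)%:R) f.
Proof.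
move=> Jirr gE; rewrite /distqf /QF.
have h x y : f x * (gdist J x y)%:R * f y = 2 * (f x * f y)
   - 2 * ((x == y)%:R * (f x * f y)) - f x * (J x y)%:R * f y.
  rewrite gE; have [->|xy] := eqVneq x y; rewrite ?Jirr /=; first by ring.
  by case: (J x y) => /=; ring.
under eq_bigr do under eq_bigr do rewrite h.
under eq_bigr do rewrite !sumrB.
rewrite !sumrB; congr (_ - _ - _).
  rewrite expr2 big_distrlr /= mulr_sumr; apply: eq_bigr => x _.
  by rewrite mulr_sumr.
rewrite mulr_sumr; apply: eq_bigr => x _.
rewrite -mulr_sumr (bigD1 x) //= eqxx mul1r big1 ?addr0; first by rewrite expr2.
by move=> y /negbTE; rewrite eq_sym => ->; rewrite mul0r.
Qed.

Lemma quad0 (b c : R) : (forall t, 0 <= t * b + t ^+ 2 * c) -> b = 0.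
Proof.
move=> H; apply/eqP/negPn/negP => b0.
pose d := 1 + `|c|.
have d0 : 0 < d by rewrite /d ltr_pwDl.
have := H (- b / d).
have -> : - b / d * b + (- b / d) ^+ 2 * c = b ^+ 2 * (c - d) / d ^+ 2.
  by field; rewrite gt_eqF.
rewrite pmulr_lge0 ?invr_gt0 ?exprn_gt0 // pmulr_rge0 ?exprn_even_gt0 //=.
rewrite subr_ge0 /d => h.
have := le_trans h (ler_norm c); lra.
Qed.

Definition BF (C : T -> T -> R) (u v : T -> R) :=
  \sum_x \sum_y u x * C x y * v y.

Lemma BF_sym C u v : (forall x y, C x y = C y x) -> BF C u v = BF C v u.
Proof.
move=> Cs; rewrite /BF exchange_big; apply: eq_bigr => x _.
by apply: eq_bigr => y _; rewrite Cs; ring.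
Qed.

Lemma QF_add C u v t : QF C (fun x => u x + t * v x) =
  QF C u + t * (BF C u v + BF C v u) + t ^+ 2 * QF C v.
Proof.
rewrite /QF /BF.
transitivity (\sum_x \sum_y (u x * C x y * u y + t * (u x * C x y * v y
   + v x * C x y * u y) + t ^+ 2 * (v x * C x y * v y))).
  by apply: eq_bigr => x _; apply: eq_bigr => y _; ring.
under eq_bigr do rewrite big_split /= big_split /= -!mulr_sumr big_split /=.
by rewrite big_split /= big_split /= -!mulr_sumr big_split /=.
Qed.

Lemma foc (C : T -> T -> R) (f : T -> R) (mu : R) (x0 : T) :
  (forall x y, C x y = C y x) ->
  (forall g, \sum_x g x = 0 -> mu * \sum_x g x ^+ 2 <= QF C g) ->
  \sum_x f x = 0 -> QF C f = mu * \sum_x f x ^+ 2 ->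
  exists c, forall x, \sum_y C x y * f y = mu * f x + c.
Proof.
move=> Cs Hmin f0 fq.
pose r x := \sum_y C x y * f y - mu * f x.
have key g : \sum_x g x = 0 -> \sum_x g x * r x = 0.
  move=> g0.
  have : 2 * (\sum_x g x * r x) = 0.
    apply: (quad0 (c := QF C g - mu * \sum_x g x ^+ 2)) => t.
    have := Hmin (fun x => f x + t * g x).
    rewrite big_split /= -mulr_sumr f0 g0 mulr0 addr0 => /(_ erefl).
    rewrite QF_add (BF_sym _ _ Cs) fq => h; rewrite -subr_ge0 in h.
    apply: (le_trans h).
    have e1 : \sum_x (f x + t * g x) ^+ 2 = \sum_x f x ^+ 2
        + t * (2 * \sum_x g x * f x) + t ^+ 2 * \sum_x g x ^+ 2.
      rewrite mulr_sumr mulr_sumr mulr_sumr -!big_split /=; apply: eq_bigr => x _.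
      by ring.
    have e2 : \sum_x g x * r x = BF C g f - mu * \sum_x g x * f x.
      rewrite /r /BF mulr_sumr -sumrB; apply: eq_bigr => x _.
      by rewrite mulrBr mulr_sumr; congr (_ - _); [apply: eq_bigr => y _ |]; ring.
    rewrite e1 e2 le_eqVlt; apply/orP; left; apply/eqP; ring.
  by move/eqP; rewrite mulf_eq0 pnatr_eq0 /= => /eqP.
exists (r x0) => x.
have := key (fun y => (y == x)%:R - (y == x0)%:R).
rewrite sumrB !sum_delta1 subrr => /(_ erefl).
under eq_bigr do rewrite mulrBl.
rewrite sumrB !sum_delta => /eqP; rewrite subr_eq0 => /eqP <-.
by rewrite /r; ring.
Qed.
End Gen.

Section Join.
Variables (R : realType) (m n : nat) (e : rel 'I_n).
Hypothesis esym : forall x y, e x y = e y x.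
Hypothesis eirr : forall x, ~~ e x x.
Hypothesis n0 : (0 < n)%N.
Hypothesis m0 : (0 < m)%N.
Local Notation T := ('I_m + 'I_n)%type.
Local Notation J := (join_Kbar m e).
Lemma J_irr x : J x x = false.
Proof. by case: x => [a|i] //=; apply/negbTE. Qed.

Lemma J_sym x y : J x y = J y x.
Proof. by case: x => [a|i]; case: y => [b|j] //=. Qed.

Lemma reach1 x y : reach J 1 x y = (x == y) || J x y.
Proof.
rewrite /=; congr (_ || _); apply/existsP/idP => [[z /andP[h /eqP <-]]|h] //.
by exists y; rewrite h eqxx.
Qed.

Lemma common x y : x != y -> ~~ J x y -> exists z, J x z && J z y.
Proof.
case: x => [a|i]; case: y => [b|j] //= _ nJ.
- by exists (inr (Ordinal n0)).
- by exists (inl (Ordinal m0)).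
Qed.

Lemma gdistE x y : gdist J x y =
  if x == y then 0%N else if J x y then 1%N else 2%N.
Proof.
rewrite /gdist card_sum !card_ord.
have [k mnk] : exists k, (m + n = k.+2)%N.
  by exists (m + n - 2)%N; rewrite -addn2 subnK // -(addn1 1) leq_add.
rewrite mnk.
rewrite /= -/(reach J 1 x y) reach1.
have [//|xy] := eqVneq x y.
rewrite /=; case: ifP => Jxy //=.
have /negbT nJ := Jxy.
have [z /andP[xz zy]] := common xy nJ.
case: k mnk => [|k] mnk.
  exfalso.
  have : (size [:: x; y; z] <= size (enum {: 'I_m + 'I_n}))%N.
    apply: uniq_leq_size => [|w _]; last by rewrite mem_enum.
    have xz' : x != z by apply/eqP => zE; move: xz; rewrite -zE J_irr.
    have zy' : y != z by apply/eqP => zE; move: zy; rewrite zE J_irr.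
    by rewrite /= !inE negb_or xy xz' zy'.
  by rewrite -cardE card_sum !card_ord mnk.
rewrite /=.
have -> : (x == y) = false by apply/negbTE.
suff -> : [exists z0, J x z0 && reach J 1 z0 y] by [].
by apply/existsP; exists z; rewrite xz reach1 zy orbT.
Qed.

Definition adjH (x y : T) : R := (J x y)%:R.
Local Notation A := (adjmx R e).

Lemma sumT (F : T -> R) : \sum_x F x = \sum_a F (inl a) + \sum_i F (inr i).
Proof. by rewrite big_sumType. Qed.

Lemma QF_block (f : T -> R) : QF adjH f =
  2 * (\sum_a f (inl a)) * (\sum_i f (inr i))
  + \sum_i \sum_j f (inr i) * (e i j)%:R * f (inr j).
Proof.
rewrite /QF sumT.
have h1 : \sum_a \sum_y f (inl a) * adjH (inl a) y * f y =
    \sum_a f (inl a) * \sum_i f (inr i).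
  apply: eq_bigr => a _; rewrite sumT big1 ?add0r; last first.
    by move=> b _; rewrite /adjH /= mulr0 mul0r.
  by rewrite mulr_sumr; apply: eq_bigr => i _; rewrite /adjH /= mulr1.
have h2 : \sum_i \sum_y f (inr i) * adjH (inr i) y * f y =
    \sum_i f (inr i) * \sum_a f (inl a)
    + \sum_i \sum_j f (inr i) * (e i j)%:R * f (inr j).
  rewrite -big_split; apply: eq_bigr => i _; rewrite sumT /=.
  by rewrite mulr_sumr; congr (_ + _); apply: eq_bigr => a _; rewrite /adjH /= mulr1.
rewrite h1 h2 -!mulr_suml; ring.
Qed.

Lemma rowsum_inl (f : T -> R) a : \sum_y adjH (inl a) y * f y = \sum_i f (inr i).
Proof.
rewrite sumT big1 ?add0r; last by move=> b _; rewrite /adjH mul0r.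
by apply: eq_bigr => i _; rewrite /adjH mul1r.
Qed.

Lemma rowsum_inr (f : T -> R) i : \sum_y adjH (inr i) y * f y =
  \sum_a f (inl a) + \sum_j (e i j)%:R * f (inr j).
Proof.
rewrite sumT; congr (_ + _).
by apply: eq_bigr => a _; rewrite /adjH mul1r.
Qed.

Lemma adjH_sym x y : adjH x y = adjH y x.
Proof. by rewrite /adjH; case: x => [a|i]; case: y => [b|j] //=; rewrite esym. Qed.

Lemma A_tr : A^T = A.
Proof. by apply/matrixP => i j; rewrite !mxE esym. Qed.

Lemma Amul (y : 'cV[R]_n) i : (A *m y) i 0 = \sum_j (e i j)%:R * y j 0.
Proof. by rewrite mxE; apply: eq_bigr => j _; rewrite mxE. Qed.

Lemma m_neq0 : (m%:R : R) != 0.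
Proof. by rewrite pnatr_eq0 -lt0n. Qed.

Lemma cV_neq0 (y : 'cV[R]_n) : y != 0 -> exists i, y i 0 != 0.
Proof.
move=> y0; case/boolP: [exists i, y i 0 != 0] => [/existsP //|].
rewrite negb_exists => /forallP h.
case/negP: y0; apply/eqP/matrixP => i j.
by rewrite (ord1 j) mxE; apply/eqP/negPn/h.
Qed.

Lemma sumsq_gt0 (y : 'cV[R]_n) : y != 0 -> 0 < \sum_i y i 0 ^+ 2.
Proof.
move=> /cV_neq0 [i yi]; rewrite (bigD1 i) //=.
apply: lt_le_trans (_ : y i 0 ^+ 2 <= _); first by rewrite exprn_even_gt0.
by rewrite lerDl; apply: sumr_ge0 => j _; exact: sqr_ge0.
Qed.

Lemma constr (y : 'cV[R]_n) (al k : R) : y != 0 ->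
  A *m y = al *: y + k *: const_mx 1 ->
  (\sum_i y i 0) * (k - (2 + al / m%:R) * (\sum_i y i 0)) = 0 ->
  exists f : T -> R, [/\ \sum_x f x = 0, 0 < \sum_x f x ^+ 2
                      & QF adjH f = al * \sum_x f x ^+ 2].
Proof.
move=> y0 Ay H; set s := \sum_i y i 0 in H.
pose f (x : T) : R := match x with inl _ => - s / m%:R | inr i => y i 0 end.
have mR := m_neq0.
have sa : \sum_a f (inl a) = - s.
  by rewrite /f sumr_const card_ord -mulr_natr; field.
exists f; split.
- by rewrite sumT sa /f -/s addNr.
- rewrite sumT /f; apply: lt_le_trans (sumsq_gt0 y0) _.
  by rewrite lerDr; apply: sumr_ge0 => a _; exact: sqr_ge0.
rewrite QF_block sa sumT /= sumr_const card_ord -/s.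
have -> : \sum_i \sum_j y i 0 * (e i j)%:R * y j 0 =
    al * \sum_i y i 0 ^+ 2 + k * s.
  rewrite /s mulr_sumr mulr_sumr -big_split /=; apply: eq_bigr => i _.
  have := congr1 (fun M : 'cV[R]_n => M i 0) Ay; rewrite Amul !mxE => h.
  transitivity (y i 0 * \sum_j (e i j)%:R * y j 0).
    by rewrite mulr_sumr; apply: eq_bigr => j _; ring.
  by rewrite h; ring.
apply/eqP; rewrite -subr_eq0; apply/eqP; rewrite -H -mulr_natr; by field.
Qed.

Lemma rV_const (v : 'rV[R]_n) :
  v *m (const_mx 1 : 'M[R]_n) = (\sum_i v 0 i) *: const_mx 1.
Proof.
apply/matrixP => i j; rewrite (ord1 i) !mxE mulr1.
by under eq_bigr do rewrite mxE mulr1.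
Qed.

Lemma rV_constc (v : 'rV[R]_n) :
  v *m (const_mx 1 : 'cV[R]_n) = (\sum_i v 0 i)%:M.
Proof.
apply/matrixP => i j; rewrite (ord1 i) (ord1 j) !mxE /= mulr1n.
by under eq_bigr do rewrite mxE mulr1.
Qed.

Lemma eig_tr (y : 'cV[R]_n) (a k : R) :
  A *m y = a *: y + k *: const_mx 1 ->
  y^T *m A = a *: y^T + k *: const_mx 1.
Proof.
move=> h; rewrite -{1}A_tr -trmx_mul h linearD /= !linearZ /= trmx_const //.
Qed.

Lemma tr_neq0 (y : 'cV[R]_n) : y != 0 -> y^T != 0.
Proof. by apply: contraNneq => h; apply/eqP/trmx_inj; rewrite h trmx0. Qed.

Lemma tr_neq0' (y : 'rV[R]_n) : y != 0 -> y^T != 0.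
Proof. by apply: contraNneq => h; apply/eqP/trmx_inj; rewrite h trmx0. Qed.

Lemma mu_in (f : T -> R) (mu c : R) :
  \sum_x f x ^+ 2 = 1 -> \sum_x f x = 0 -> mu < 0 -> (m = 1%N -> mu < -1) ->
  (forall x, \sum_y adjH x y * f y = mu * f x + c) -> in_Lambda m A mu.
Proof.
move=> f1 f0 mu0 m1 Hc; rewrite /in_Lambda /=.
have mu0' : mu != 0 by rewrite lt_eqF.
have mR := m_neq0.
set s := \sum_i f (inr i).
have xa a : f (inl a) = (s - c) / mu.
  by have := Hc (inl a); rewrite rowsum_inl -/s => ->; field.
have sumx : \sum_a f (inl a) = - s by move: f0; rewrite sumT -/s => /eqP; rewrite addr_eq0 => /eqP.
have X : (s - c) / mu = - s / m%:R.
  move: sumx; rewrite (eq_bigr _ (fun a _ => xa a)) sumr_const card_ord => h.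
  have h' : (s - c) / mu * m%:R = - s by rewrite mulr_natr.
  by rewrite -h' mulfK.
have cE : c = s + mu * s / m%:R.
  have -> : c = s - (s - c) / mu * mu by field.
  by rewrite X; field.
pose y : 'cV[R]_n := \col_i f (inr i).
have yE i : y i 0 = f (inr i) by rewrite mxE.
have sy : \sum_i y i 0 = s by apply: eq_bigr => i _; rewrite yE.
pose k := 2 * s + mu * s / m%:R.
have Ay : A *m y = mu *: y + k *: const_mx 1.
  apply/matrixP => i j; rewrite (ord1 j) Amul !mxE.
  have := Hc (inr i); rewrite rowsum_inr sumx => h.
  under eq_bigr do rewrite yE.
  apply: (@addrI _ (- s)); rewrite h /k cE; ring.
have y0 : y != 0.
  apply/eqP => y0.
  have fr i : f (inr i) = 0 by rewrite -yE y0 mxE.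
  have s0 : s = 0 by rewrite /s big1.
  have c0 : c = 0 by rewrite cE s0; ring.
  suff : \sum_x f x ^+ 2 = 0 by rewrite f1 => /eqP; rewrite oner_eq0.
  rewrite sumT big1 ?add0r; first by rewrite big1 // => i _; rewrite fr expr0n.
  by move=> a _; rewrite xa s0 c0 subrr mul0r expr0n.
have vA := eig_tr Ay.
have v0 := tr_neq0 y0.
have [m2|m2] := eqVneq mu (- (2 * m%:R)).
  right; right; left; split => //.
  apply/eigenvalueP; exists y^T => //.
  by rewrite vA /k m2 (_ : 2 * s + _ = 0) ?scale0r ?addr0 //; field.
have [m1'|m1'] := eqVneq mu (- m%:R).
  have mge2 : (2 <= m)%N.
    case: m m0 m1 m1' {mR X cE k Ay m2 vA} => [//|[|m']] // _ h.
    by move=> hm; have := h erefl; rewrite hm ltxx.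
  left; split => //; split => //.
  apply/eigenvalueP; exists y^T => //.
  rewrite mulmxBr rV_const vA /k m1'.
  have syT : \sum_i y^T 0 i = s by rewrite -sy; apply: eq_bigr => i _; rewrite mxE.
  by apply/matrixP => i j; rewrite !mxE syT; field; exact: mR.
have [s0|s0] := eqVneq s 0.
  have c0 : c = 0 by rewrite cE s0; ring.
  have k0 : k = 0 by rewrite /k s0; ring.
  right; right; right; split.
    apply/eigenvalueP; exists y^T => //.
    by rewrite vA k0 scale0r addr0.
  split; first by apply/eqP.
  split; first by apply/eqP.
  split; first by apply/eqP.
  exists y; split; [|split].
  - by rewrite Ay k0 scale0r addr0.
  - move: f1; rewrite sumT big1 ?add0r.
      by under eq_bigr do rewrite yE.
    by move=> a _; rewrite xa s0 c0 subrr mul0r expr0n.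
  - by rewrite sy.
have k0 : k != 0.
  rewrite /k (_ : 2 * s + _ = s * ((mu + 2 * m%:R) / m%:R)); last by field.
  rewrite mulf_eq0 negb_or s0 /= mulf_eq0 negb_or invr_eq0 mR andbT.
  by rewrite addr_eq0.
case/boolP: (eigenvalue A mu) => [eig|neig].
  have [w wA w0] := eigenvalueP eig.
  have sw : \sum_i w 0 i = 0.
    have h := congr1 (mulmx w) Ay.
    rewrite mulmxA wA mulmxDr -!scalemxAr -scalemxAl rV_constc in h.
    have h2 : k *: (\sum_i w 0 i)%:M = 0 :> 'M[R]_1.
      by apply: (@addrI _ (mu *: (w *m y))); rewrite addr0 -h.
    have := congr1 (fun M : 'M[R]_1 => M 0 0) h2; rewrite !mxE /= mulr1n.
    by move/eqP; rewrite mulf_eq0 (negbTE k0) /= => /eqP.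
  have wT0 := tr_neq0' w0.
  set S := \sum_i w^T i 0 ^+ 2.
  have S0 : 0 < S := sumsq_gt0 wT0.
  pose t := (Num.sqrt S)^-1.
  have t2 : t ^+ 2 * S = 1.
    by rewrite /t exprVn sqr_sqrtr ?ltW // mulVf // gt_eqF.
  right; right; right; split => //.
  split; first by apply/eqP.
  split; first by apply/eqP.
  split; first by apply/eqP.
  exists (t *: w^T); split; [|split].
  - by rewrite -scalemxAr -{1}A_tr -trmx_mul wA linearZ /= scalerA mulrC -scalerA.
  - rewrite -t2 /S mulr_sumr; apply: eq_bigr => i _; rewrite mxE; ring.
  - rewrite (eq_bigr (fun i => t * w 0 i)); last by move=> i _; rewrite !mxE.
    by rewrite -mulr_sumr sw mulr0.
have unitM : (A - mu%:M) \in unitmx.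
  by rewrite -row_free_unit -kermx_eq0; apply/negPn.
have My : (A - mu%:M) *m y = k *: const_mx 1.
  by rewrite mulmxBl Ay mul_scalar_mx addrAC subrr add0r.
have yE2 : y = k *: (invmx (A - mu%:M) *m const_mx 1).
  by rewrite scalemxAr -My mulKmx.
set SE := sum_entries _.
have SEE : SE = \sum_i (invmx (A - mu%:M) *m (const_mx 1 : 'cV[R]_n)) i 0.
  rewrite /SE /sum_entries; apply: eq_bigr => i _; rewrite mxE.
  by apply: eq_bigr => j _; rewrite mxE mulr1.
have sk : s = k * SE.
  rewrite -sy SEE mulr_sumr; apply: eq_bigr => i _.
  by rewrite [in LHS]yE2 mxE.
have h1 : s * ((2 + mu / m%:R) * SE - 1) = 0.
  by rewrite mulrBr mulr1 {2}sk /k; apply/eqP; rewrite subr_eq0; apply/eqP; ring.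
have h2 : (2 + mu / m%:R) * SE = 1.
  by move/eqP: h1; rewrite mulf_eq0 (negbTE s0) /= subr_eq0 => /eqP.
right; left; split => //.
split; first by apply/eqP.
split; first by apply/eqP.
split; first by apply/eqP.
rewrite (_ : (mu + 2 * m%:R) * SE - m%:R = m%:R * ((2 + mu / m%:R) * SE - 1)).
  by rewrite h2 subrr mulr0.
by field.
Qed.

Lemma E2_bound :
  \sum_i \sum_j (e i j)%:R = (n%:R ^+ 2 - n%:R : R)
     - \sum_(i < n) \sum_(j < n) ((i != j)%:R - (e i j)%:R).
Proof.
have h : \sum_(i < n) \sum_(j < n) ((i != j)%:R : R) = n%:R ^+ 2 - n%:R.
  transitivity (\sum_(i < n) (n%:R - 1 : R)).
    apply: eq_bigr => i _.
    transitivity (\sum_(j < n) (1 - (j == i)%:R : R)).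
      by apply: eq_bigr => j _; rewrite eq_sym; case: (j == i); rewrite /= ?subrr ?subr0.
    by rewrite sumrB sum_delta1 sumr_const card_ord.
  by rewrite sumr_const card_ord -mulr_natr; ring.
rewrite -h; under [X in _ = _ - X]eq_bigr do rewrite sumrB.
by rewrite sumrB; ring.
Qed.

Lemma D_ge0 i j : (0 : R) <= (i != j)%:R - (e i j)%:R.
Proof.
have [->|ij] := eqVneq i j; first by rewrite (negbTE (eirr j)) subrr.
by rewrite /=; case: (e i j); rewrite ?subrr ?subr0.
Qed.

Lemma test_vec (mu : R) :
  (forall g : T -> R, \sum_x g x = 0 -> mu * \sum_x g x ^+ 2 <= QF adjH g) ->
  ~ complete_graph J -> mu < 0 /\ (m = 1%N -> mu < -1).
Proof.
move=> Hm ncomp.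
pose f0 (x : T) : R := match x with inl _ => - n%:R | inr _ => m%:R end.
set E2 := \sum_i \sum_j ((e i j)%:R : R).
have sf : \sum_x f0 x = 0.
  by rewrite sumT /f0 !sumr_const !card_ord; ring.
have h := Hm f0 sf.
rewrite QF_block sumT /f0 /= !sumr_const !card_ord in h.
have eE : \sum_i \sum_j m%:R * (e i j)%:R * m%:R = m%:R ^+ 2 * E2 :> R.
  rewrite /E2 mulr_sumr; apply: eq_bigr => i _; rewrite mulr_sumr.
  by apply: eq_bigr => j _; ring.
rewrite eE in h.

have Dg : 0 <= \sum_(i < n) \sum_(j < n) (((i != j)%:R : R) - (e i j)%:R).
  by apply: sumr_ge0 => i _; apply: sumr_ge0 => j _; exact: D_ge0.
have E2b : E2 <= n%:R ^+ 2 - n%:R by rewrite /E2 E2_bound; lra.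
have n0R : (0 : R) < n%:R by rewrite ltr0n.
have m0R : (0 : R) < m%:R by rewrite ltr0n.
have e1 : (1 *- n) ^+ 2 *+ m + m%:R ^+ 2 *+ n =
    m%:R * (n%:R ^+ 2 + m%:R * n%:R) :> R by ring.
have e2 : 2 * (1 *- n *+ m) * (m%:R *+ n) + m%:R ^+ 2 * E2 =
    m%:R ^+ 2 * (E2 - 2 * n%:R ^+ 2) :> R by ring.
rewrite e1 e2 in h.
have N2 : (0 : R) <= n%:R ^+ 2 by exact: sqr_ge0.
have mn0 : (0 : R) <= m%:R * n%:R by rewrite mulr_ge0 // ltW.
split.
  rewrite ltNge; apply/negP => mu0.
  have h1 : 0 <= mu * (m%:R * (n%:R ^+ 2 + m%:R * n%:R)).
    have P0 : (0 : R) <= n%:R ^+ 2 + m%:R * n%:R by lra.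
    by rewrite mulr_ge0 // mulr_ge0 // ltW.
  have h2 : m%:R ^+ 2 * (E2 - 2 * n%:R ^+ 2) < 0.
    by rewrite pmulr_rlt0 ?exprn_gt0 //; lra.
  lra.
move=> m1.
have [i0 [j0 [ij nE]]] : exists i0 j0, i0 != j0 /\ ~~ e i0 j0.
  case/boolP: [exists x : T, [exists y : T, (x != y) && ~~ J x y]]
    => [/existsP [x /existsP [y /andP [xy nJ]]]|H]; last first.
    exfalso; apply: ncomp => x y xy; move: H; rewrite negb_exists => /forallP /(_ x).
    by rewrite negb_exists => /forallP /(_ y); rewrite xy /= negbK.
  case: x y xy nJ => [a|i] [b|j] //= xy nJ.
    exfalso; move: xy; have -> : a = b; last by rewrite eqxx.
    apply: val_inj.
    have ha : (val a < 1)%N by have := ltn_ord a; rewrite [X in (_ < X)%N -> _]m1.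
    have hb : (val b < 1)%N by have := ltn_ord b; rewrite [X in (_ < X)%N -> _]m1.
    by move: ha hb; rewrite !ltnS !leqn0 => /eqP -> /eqP ->.
  by exists i, j; split => //; apply: contraNneq xy => ->.
have D1 : 1 <= \sum_(i < n) \sum_(j < n) (((i != j)%:R : R) - (e i j)%:R).
  rewrite (bigD1 i0) //= (bigD1 j0) //= ij (negbTE nE) subr0.
  have S1 : 0 <= \sum_(j < n | j != j0) (((i0 != j)%:R : R) - (e i0 j)%:R).
    by apply: sumr_ge0 => j _; exact: D_ge0.
  have S2 : 0 <= \sum_(i < n | i != i0) \sum_(j < n) (((i != j)%:R : R) - (e i j)%:R).
    by apply: sumr_ge0 => i _; apply: sumr_ge0 => j _; exact: D_ge0.
  move: S1 S2; rewrite /= => S1 S2; lra.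
have E2b' : E2 <= n%:R ^+ 2 - n%:R - 1 by rewrite /E2 E2_bound; lra.
rewrite m1 in h.
rewrite ltNge; apply/negP => mu1.
have h1 : - (n%:R ^+ 2 + n%:R) <= mu * (1%:R * (n%:R ^+ 2 + 1%:R * n%:R)) :> R.
  rewrite !mul1r -mulN1r ler_wpM2r //; lra.
move: h h1; rewrite !mul1r expr1n mul1r; lra.
Qed.

Lemma eig_tr2 (v : 'rV[R]_n) (a k : R) :
  v *m A = a *: v + k *: const_mx 1 ->
  A *m v^T = a *: v^T + k *: const_mx 1.
Proof.
move=> h; rewrite -{1}A_tr -trmx_mul h linearD /= !linearZ /= trmx_const //.
Qed.

Lemma lower (mu : R) :
  (forall g : T -> R, \sum_x g x = 0 -> mu * \sum_x g x ^+ 2 <= QF adjH g) ->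
  forall b, in_Lambda m A b -> mu <= b.
Proof.
move=> Hm b.
have mR := m_neq0.
have key (al : R) (y : 'cV[R]_n) k : y != 0 -> A *m y = al *: y + k *: const_mx 1 ->
    (\sum_i y i 0) * (k - (2 + al / m%:R) * (\sum_i y i 0)) = 0 -> mu <= al.
  move=> y0 Ay H; have [f [f0 fp fq]] := constr y0 Ay H.
  by have := Hm f f0; rewrite fq ler_pM2r.
have sT (v : 'rV[R]_n) : \sum_i v^T i 0 = \sum_i v 0 i.
  by apply: eq_bigr => i _; rewrite mxE.
rewrite /in_Lambda /=.
case => [[m2 [eig ->]] | [[neig [b0 [bm [b2m Heq]]]] | [[eig ->] | [eig [b0 [bm [b2m [g [Ag [g1 g0]]]]]]]]]].
- have [v vJ v0] := eigenvalueP eig.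
  have vA : v *m A = (- m%:R) *: v + (\sum_i v 0 i) *: const_mx 1.
    move: vJ; rewrite mulmxBr rV_const => /eqP; rewrite subr_eq addrC -subr_eq => /eqP <-.
    by rewrite scaleNr addrC.
  apply: (key _ _ (\sum_i v 0 i) (tr_neq0' v0)); first exact: eig_tr2.
  by rewrite sT; apply/eqP; rewrite mulf_eq0; apply/orP; right; apply/eqP; field.
- have unitM : (A - b%:M) \in unitmx.
    by rewrite -row_free_unit -kermx_eq0; apply/negPn.
  pose y := invmx (A - b%:M) *m (const_mx 1 : 'cV[R]_n).
  have My : (A - b%:M) *m y = const_mx 1 by rewrite /y mulKVmx.
  have Ay : A *m y = b *: y + 1 *: const_mx 1.
    by move: My; rewrite mulmxBl mul_scalar_mx scale1r => /eqP; rewrite subr_eq addrC => /eqP.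
  have y0 : y != 0.
    apply/eqP => y0; move: My; rewrite y0 mulmx0 => /matrixP /(_ (Ordinal n0) 0).
    by rewrite !mxE => /eqP; rewrite eq_sym oner_eq0.
  apply: (key _ _ 1 y0 Ay).
  have -> : \sum_i y i 0 = sum_entries (invmx (A - b%:M)).
    rewrite /sum_entries; apply: eq_bigr => i _; rewrite mxE.
    by apply: eq_bigr => j _; rewrite mxE mulr1.
  apply/eqP; rewrite mulf_eq0; apply/orP; right; apply/eqP.
  rewrite (_ : 2 + b / m%:R = (b + 2 * m%:R) / m%:R); last by field.
  rewrite mulrAC (_ : (b + 2 * m%:R) * _ = m%:R); first by rewrite divff // subrr.
  by apply/eqP; rewrite -subr_eq0 Heq.
- have [v vA v0] := eigenvalueP eig.
  apply: (key _ _ 0 (tr_neq0' v0)); first by apply: eig_tr2; rewrite vA scale0r addr0.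
  apply/eqP; rewrite mulf_eq0; apply/orP; right; apply/eqP; field; exact: mR.
- have gn0 : g != 0.
    apply/eqP => gz; move: g1; rewrite gz big1 => [/eqP|i _]; last by rewrite mxE expr0n.
    by rewrite eq_sym oner_eq0.
  apply: (key _ _ 0 gn0); first by rewrite Ag scale0r addr0.
  by rewrite g0 mul0r.
Qed.


Lemma main : ~ complete_graph J ->
  exists a0 : R,
    in_Lambda m A a0 /\
    (forall b : R, in_Lambda m A b -> a0 <= b) /\
    is_QEC J (- a0 - 2).
Proof.
move=> ncomp.
pose g0 (x : T) : R := match x with inl _ => - n%:R | inr _ => m%:R end.
have [f0 [f01 f02]] : exists f : T -> R, \sum_x f x ^+ 2 = 1 /\ \sum_x f x = 0.
  apply: (@normalize _ _ g0).
    by rewrite sumT /g0 !sumr_const !card_ord; ring.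
  rewrite sumT /g0 !sumr_const !card_ord.
  have h1 : (0 : R) <= (- n%:R) ^+ 2 *+ m by rewrite mulrn_wge0 // sqr_ge0.
  have h2 : (0 : R) < (m%:R) ^+ 2 *+ n by rewrite pmulrn_lgt0 // exprn_gt0 // ltr0n.
  lra.
have [fs [fs1 fs0 fsmin]] := exists_min adjH (ex_intro _ f0 (conj f01 f02)).
set mu := QF adjH fs.
have Hm : forall g : T -> R, \sum_x g x = 0 -> mu * \sum_x g x ^+ 2 <= QF adjH g.
  exact: hom_min fsmin.
have [mu0 mu1] := test_vec Hm ncomp.
have fq : QF adjH fs = mu * \sum_x fs x ^+ 2 by rewrite fs1 mulr1.
have [c Hc] := foc (inr (Ordinal n0)) adjH_sym Hm fs0 fq.
have inL := mu_in fs1 fs0 mu0 mu1 Hc.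
have dE (f : T -> R) : distqf J f = 2 * (\sum_x f x) ^+ 2 - 2 * \sum_x f x ^+ 2 - QF adjH f.
  by apply: distqf_gen; [exact: J_irr | exact: gdistE].
exists mu; split => //; split; first exact: lower Hm.
split.
  by exists fs; split => //; split => //; rewrite dE fs0 fs1 expr0n /= /mu; ring.
move=> f f1 f0'; rewrite dE f0' f1.
have := Hm f f0'; rewrite f1 mulr1 expr0n /= /mu; lra.
Qed.

End Join.

Theorem theorem3p7 (R : realType) (n m : nat) (e : rel 'I_n) :
  simple_graph e -> (1 <= n)%N -> (1 <= m)%N ->
  ~ complete_graph (join_Kbar m e) ->
  exists a0 : R,
    in_Lambda m (adjmx R e) a0 /\
    (forall b : R, in_Lambda m (adjmx R e) b -> a0 <= b) /\
    is_QEC (join_Kbar m e) (- a0 - 2).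
Proof.
move=> [esym eirr] n1 m1.
exact: main.
Qed.
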